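(* Let the true margin $\gamma$ of $\mathcal{D}$ satisfy $\gamma>0$. For any finite dataset $R\subseteq\mathrm{supp}(\mathcal{D})$ with empirical margin $\gamma_R\ge\gamma>0$, $$\mathrm{RS}_{\mathrm{SVM}}(R)\le\sqrt{\frac{1}{\gamma^2}-\frac{1}{\gamma_R^2}}.$$
   Context: Let $k$ be a positive semidefinite kernel on $\mathcal{X}$ with RKHS $(\mathcal{H},\langle\cdot,\cdot\rangle_{\mathcal{H}})$ and feature map $\phi$ with $k(x,x')=\langle\phi(x),\phi(x')\rangle_{\mathcal{H}}$. Let $\mathcal{D}$ be a distribution on $\mathcal{X}\times\{-1,+1\}$. The true margin is $\gamma=\sup_{u\in\mathcal{H},\|u\|_{\mathcal{H}}=1}\inf_{(x,y)\in\mathrm{supp}(\mathcal{D})}y\langle u,\phi(x)\rangle_{\mathcal{H}}$, and the empirical margin $\gamma_R$ of a dataset $R=\{(x_i,y_i)\}_{i=1}^n$ is defined with the infimum over $(x_i,y_i)\in R$ instead. The hard-margin kernel SVM solution is $w_R\in\arg\min_{w\in\mathcal{H}}\frac12\|w\|_{\mathcal{H}}^2$ subject to $y_i\langle w,\phi(x_i)\rangle_{\mathcal{H}}\ge1$ for all $i$. The retain sensitivity is $\mathrm{RS}_{\mathrm{SVM}}(R)=\sup_{(x,y)\in\mathrm{supp}(\mathcal{D})}\|w_R-w_{R\cup\{(x,y)\}}\|_{\mathcal{H}}$. *)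

(* Defs.v *)
From HB Require Import structures.
From mathcomp Require Import all_boot all_order all_algebra.
From mathcomp Require Import all_classical all_reals ereal.
From Stdlib Require List.
Set Implicit Arguments. Unset Strict Implicit. Unset Printing Implicit Defensive.
Import Order.TTheory GRing.Theory Num.Theory.
Local Open Scope ring_scope.
Local Open Scope classical_set_scope.

Definition hnorm (R : realType) (V : lmodType R) (ip : V -> V -> R) (v : V) : R :=
  Num.sqrt (ip v v).

Record is_hilbert (R : realType) (V : lmodType R) (ip : V -> V -> R) : Prop := {
  ip_sym : forall u v, ip u v = ip v u;
  ip_linear : forall (a : R) (u v w : V), ip (a *: u + v) w = a * ip u w + ip v w;
  ip_posdef : forall v : V, v != 0 -> 0 < ip v v;
  ip_complete : forall u : nat -> V,
    (forall eps : R, 0 < eps -> exists N : nat, forall m n : nat,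
        (N <= m)%N -> (N <= n)%N -> hnorm ip (u m - u n) < eps) ->
    exists l : V, forall eps : R, 0 < eps -> exists N : nat, forall n : nat,
        (N <= n)%N -> hnorm ip (u n - l) < eps
}.

Definition lab (R : realType) (b : bool) : R := if b then 1 else -1.

Definition margin (R : realType) (V : lmodType R) (ip : V -> V -> R)
  (X : Type) (phi : X -> V) (A : set (X * bool)) : \bar R :=
  ereal_sup [set ereal_inf [set ((lab R z.2 * ip u (phi z.1))%:E) | z in A]
            | u in [set u : V | hnorm ip u = 1]].

Definition dset (X : Type) (D : seq (X * bool)) : set (X * bool) :=
  [set z | List.In z D].

Definition svm_feasible (R : realType) (V : lmodType R) (ip : V -> V -> R)
  (X : Type) (phi : X -> V) (D : seq (X * bool)) (w : V) : Prop :=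
  forall z, List.In z D -> 1 <= lab R z.2 * ip w (phi z.1).

Definition is_svm_solution (R : realType) (V : lmodType R) (ip : V -> V -> R)
  (X : Type) (phi : X -> V) (D : seq (X * bool)) (w : V) : Prop :=
  svm_feasible ip phi D w /\
  forall w' : V, svm_feasible ip phi D w' ->
    1 / 2 * hnorm ip w ^+ 2 <= 1 / 2 * hnorm ip w' ^+ 2.

(* 1/g^2 for an extended real margin, with the convention 1/(+oo)^2 = 0
   (the empirical margin of the empty dataset is +oo). *)
Definition einvsq (R : realType) (g : \bar R) : R :=
  match g with
  | EFin r => r ^-2
  | _ => 0
  end.

(* Main.v *)
Require Import Defs.
From HB Require Import structures.
From mathcomp Require Import all_boot all_order all_algebra.
From mathcomp Require Import all_classical all_reals ereal.
From mathcomp Require Import ring lra.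
From Stdlib Require List.
Import Order.TTheory GRing.Theory Num.Theory.
Local Open Scope ring_scope.
Local Open Scope classical_set_scope.


Lemma ip0l (R : realType) (V : lmodType R) (ip : V -> V -> R) :
  is_hilbert ip -> forall v, ip 0 v = 0.
Proof.
move=> H v; have := ip_linear H 1 0 0 v; rewrite scale1r addr0 mul1r => E.
lra.
Qed.

Lemma ipDl (R : realType) (V : lmodType R) (ip : V -> V -> R) :
  is_hilbert ip -> forall u v w, ip (u + v) w = ip u w + ip v w.
Proof. by move=> H u v w; rewrite -{1}(scale1r u) ip_linear // mul1r. Qed.

Lemma ipZl (R : realType) (V : lmodType R) (ip : V -> V -> R) :
  is_hilbert ip -> forall a u w, ip (a *: u) w = a * ip u w.
Proof. by move=> H a u w; rewrite -(addr0 (a *: u)) ip_linear // ip0l // addr0. Qed.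

Lemma ipNl (R : realType) (V : lmodType R) (ip : V -> V -> R) :
  is_hilbert ip -> forall u w, ip (- u) w = - ip u w.
Proof. by move=> H u w; rewrite -scaleN1r ipZl // mulN1r. Qed.

Lemma ipBl (R : realType) (V : lmodType R) (ip : V -> V -> R) :
  is_hilbert ip -> forall u v w, ip (u - v) w = ip u w - ip v w.
Proof. by move=> H u v w; rewrite ipDl // ipNl. Qed.

Lemma ipDr (R : realType) (V : lmodType R) (ip : V -> V -> R) :
  is_hilbert ip -> forall u v w, ip w (u + v) = ip w u + ip w v.
Proof. by move=> H u v w; rewrite !(ip_sym H w) ipDl. Qed.

Lemma ipZr (R : realType) (V : lmodType R) (ip : V -> V -> R) :
  is_hilbert ip -> forall a u w, ip w (a *: u) = a * ip w u.
Proof. by move=> H a u w; rewrite !(ip_sym H w) ipZl. Qed.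

Lemma ipBr (R : realType) (V : lmodType R) (ip : V -> V -> R) :
  is_hilbert ip -> forall u v w, ip w (u - v) = ip w u - ip w v.
Proof. by move=> H u v w; rewrite !(ip_sym H w) ipBl. Qed.

Lemma ip_ge0 (R : realType) (V : lmodType R) (ip : V -> V -> R) :
  is_hilbert ip -> forall v, 0 <= ip v v.
Proof.
move=> H v; have [->|nz] := eqVneq v 0; first by rewrite ip0l.
exact/ltW/ip_posdef.
Qed.

Lemma hnorm_sq (R : realType) (V : lmodType R) (ip : V -> V -> R) :
  is_hilbert ip -> forall v, hnorm ip v ^+ 2 = ip v v.
Proof. by move=> H v; rewrite /hnorm sqr_sqrtr // ip_ge0. Qed.

Lemma ip_expand (R : realType) (V : lmodType R) (ip : V -> V -> R) :
  is_hilbert ip -> forall a b, ip (a + b) (a + b) = ip a a + 2 * ip a b + ip b b.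
Proof.
move=> H a b; rewrite ipDl // !ipDr // (ip_sym H b a); ring.
Qed.

Lemma lab_sq (R : realType) b : lab R b * lab R b = 1.
Proof. by case: b; rewrite /lab ?mulrNN mulr1. Qed.
Arguments ip0l {R V ip}. Arguments ipDl {R V ip}. Arguments ipZl {R V ip}.
Arguments ipNl {R V ip}. Arguments ipBl {R V ip}. Arguments ipDr {R V ip}.
Arguments ipZr {R V ip}. Arguments ipBr {R V ip}. Arguments ip_ge0 {R V ip}.
Arguments hnorm_sq {R V ip}. Arguments ip_expand {R V ip}.


Lemma unit_ip (R : realType) (V : lmodType R) (ip : V -> V -> R) :
  is_hilbert ip -> forall u, hnorm ip u = 1 -> ip u u = 1.
Proof. by move=> H u hu; rewrite -hnorm_sq // hu expr1n. Qed.

Lemma bound_ip (R : realType) (V : lmodType R) (ip : V -> V -> R) :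
  is_hilbert ip -> forall u p (b : bool), ip u u = 1 ->
  lab R b * ip u p <= (1 + ip p p) / 2.
Proof.
move=> H u p b hu.
have := ip_ge0 H (u - lab R b *: p).
rewrite !ipBl // !ipBr // !ipZl // !ipZr // (ip_sym H p u) hu.
have := lab_sq R b; set s := lab R b; set c := ip u p; set d := ip p p.
move=> hs h; rewrite mulrA hs mul1r in h. lra.
Qed.

Lemma margin_ub (R : realType) (V : lmodType R) (ip : V -> V -> R)
  (X : Type) (phi : X -> V) (A : set (X * bool)) z :
  is_hilbert ip -> A z ->
  (margin ip phi A <= ((1 + ip (phi z.1) (phi z.1)) / 2)%:E)%E.
Proof.
move=> H Az; apply: ge_ereal_sup => _ [u Uu <-].
apply: (@le_trans _ _ ((lab R z.2 * ip u (phi z.1))%:E)).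
  by apply: ereal_inf_lbound; exists z.
rewrite lee_fin; apply: bound_ip => //; exact: unit_ip.
Qed.

Lemma margin_gt (R : realType) (V : lmodType R) (ip : V -> V -> R)
  (X : Type) (phi : X -> V) (A : set (X * bool)) g s :
  margin ip phi A = g%:E -> s < g ->
  exists u, hnorm ip u = 1 /\ forall z, A z -> s < lab R z.2 * ip u (phi z.1).
Proof.
move=> E sg; have : (s%:E < margin ip phi A)%E by rewrite E lte_fin.
move=> /ereal_sup_gt [_ [u Uu <-] hs]; exists u; split => // z Az.
rewrite -lte_fin; apply: (lt_le_trans hs); apply: ereal_inf_lbound; by exists z.
Qed.

Lemma margin_lb (R : realType) (V : lmodType R) (ip : V -> V -> R)
  (X : Type) (phi : X -> V) (A : set (X * bool)) u (m : \bar R) :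
  hnorm ip u = 1 -> (forall z, A z -> (m <= (lab R z.2 * ip u (phi z.1))%:E)%E) ->
  (m <= margin ip phi A)%E.
Proof.
move=> hu hm; apply: (le_trans _ (ereal_sup_ubound _)); last by exists u.
by apply: le_ereal_inf_tmp => _ [z Az <-]; apply: hm.
Qed.

Lemma margin_nil (R : realType) (V : lmodType R) (ip : V -> V -> R)
  (X : Type) (phi : X -> V) (A : set (X * bool)) :
  (0 < margin ip phi A)%E -> margin ip phi (dset [::]) = +oo%E.
Proof.
move=> /ereal_sup_gt [_ [u Uu _] _]; apply/eqP; rewrite eq_le leey /=.
by apply: (@margin_lb _ _ _ _ _ _ u) => // z [].
Qed.
Arguments unit_ip {R V ip}. Arguments bound_ip {R V ip}.


Theorem mainTheorem10 (R : realType) (V : lmodType R) (ip : V -> V -> R)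
  (X : Type) (phi : X -> V) (supp : set (X * bool)) :
  is_hilbert ip ->
  (0 < margin ip phi supp)%E ->
  forall D : seq (X * bool),
    (forall z, List.In z D -> supp z) ->
    (margin ip phi supp <= margin ip phi (dset D))%E ->
    forall wD : V, is_svm_solution ip phi D wD ->
    forall z : X * bool, supp z ->
    forall wDz : V, is_svm_solution ip phi (z :: D) wDz ->
      hnorm ip (wD - wDz) <=
        Num.sqrt (einvsq (margin ip phi supp) - einvsq (margin ip phi (dset D))).
Proof.
move=> H gpos D Dsupp gle a [feasD optD] z sz b [feasDz optDz].
have optD' : forall w, svm_feasible ip phi D w -> ip a a <= ip w w.
  by move=> w /optD; rewrite !hnorm_sq //; lra.
have optDz' : forall w, svm_feasible ip phi (z :: D) w -> ip b b <= ip w w.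
  by move=> w /optDz; rewrite !hnorm_sq //; lra.
have feasb : svm_feasible ip phi D b by move=> y hy; apply: feasDz; right.
set c := ip a (b - a); set d := ip (b - a) (b - a).
have d0 : 0 <= d by apply: ip_ge0.
have c0 : 0 <= c.
  have key : forall t, 0 <= t <= 1 -> 0 <= 2 * t * c + t ^+ 2 * d.
    move=> t /andP[t0 t1].
    have : svm_feasible ip phi D (a + t *: (b - a)).
      move=> y hy; have h1 := feasD y hy; have h2 := feasb y hy.
      rewrite ipDl // ipZl // ipBl //.
      move: h1 h2; set l := lab R y.2; set A := ip a (phi y.1); set B := ip b (phi y.1).
      move=> h1 h2; nra.
    move/optD'; rewrite ip_expand // !ipZl // !ipZr // -/c -/d expr2; nra.
  rewrite leNgt; apply/negP => cn.
  have e0 : 0 < d - c by lra.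
  set t := - c / (d - c).
  have te : t * (d - c) = - c by rewrite /t mulrAC -mulrA divff ?mulr1 // gt_eqF.
  have t0 : 0 < t by rewrite /t divr_gt0 //; lra.
  have t1 : t <= 1 by rewrite /t ler_pdivrMr //; lra.
  have h : 0 <= 2 * t * c + t ^+ 2 * d by apply: key; rewrite (ltW t0) t1.
  have : 0 <= 2 * c + t * d.
    by rewrite -(pmulr_rge0 _ t0); move: h; rewrite expr2; nra.
  nra.
case Eg: (margin ip phi supp) gpos gle => [g| |] // gpos gle; last first.
  by have := @margin_ub _ _ ip _ phi supp z H sz; rewrite Eg.
rewrite lte_fin in gpos.
have Cb : ip b b <= g ^-2.
  rewrite leNgt; apply/negP => hq.
  set q := ip b b in hq *.
  have q0 : 0 < q by apply: lt_trans hq; rewrite invr_gt0 exprn_gt0.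
  set cc := g ^+ 2 * q.
  have cc1 : 1 < cc.
    have h := hq; rewrite -(ltr_pM2l (exprn_gt0 2 gpos)) mulfV in h => //.
    by rewrite expf_neq0 // gt_eqF.
  set s := g * (cc + 1) / (2 * cc).
  have se : s * (2 * cc) = g * (cc + 1).
    by rewrite /s mulrAC -mulrA divff ?mulr1 // mulf_neq0 // gt_eqF //; lra.
  have s0 : 0 < s by rewrite /s divr_gt0 ?mulr_gt0 //; lra.
  have sg : s < g by rewrite /s ltr_pdivrMr ?mulr_gt0 //; nra.
  have [u [hu hsu]] := @margin_gt _ _ _ _ _ _ _ _ Eg sg.
  have uu := unit_ip H u hu.
  have : svm_feasible ip phi (z :: D) (s^-1 *: u).
    move=> y hy; rewrite ipZl // mulrCA.
    have hy' : supp y by case: hy => [<-|/Dsupp].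
    have := hsu y hy'; set m := lab R y.2 * ip u (phi y.1) => hm.
    by rewrite -(ler_pM2l s0) mulrA mulfV ?gt_eqF // mul1r mulr1 ltW.
  move/optDz'; rewrite ipZl // ipZr // uu mulr1 => hqs.
  have : s * s * q <= 1.
    have h2 : s * s * (s^-1 / s) = 1 by rewrite mulrACA mulfV ?gt_eqF // mulr1.
    rewrite -[X in _ <= X]h2 (ler_pM2l (mulr_gt0 s0 s0)); exact: hqs.
  move=> hA.
  have hB : (s * (2 * cc)) ^+ 2 * q = cc * (cc + 1) ^+ 2 by rewrite se /cc; ring.
  have E1 : (s * (2 * cc)) ^+ 2 * q = 4 * cc ^+ 2 * (s * s * q) by ring.
  have hC : cc * (cc + 1) ^+ 2 <= 4 * cc ^+ 2 * 1.
    by rewrite -hB E1 ler_wpM2l // mulr_ge0 // exprn_ge0 //; lra.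
  have hD : 0 < cc * (cc - 1) ^+ 2 by rewrite mulr_gt0 ?exprn_gt0 //; lra.
  have : cc * (cc - 1) ^+ 2 = cc * (cc + 1) ^+ 2 - 4 * cc ^+ 2 * 1 by ring.
  lra.
have Da : einvsq (margin ip phi (dset D)) <= ip a a.
  case Er: (margin ip phi (dset D)) gle => [r| |] gle /=; last 2 first.
  - exact: ip_ge0.
  - by rewrite leeNy_eq in gle.
  rewrite lee_fin in gle; have r0 : 0 < r by exact: lt_le_trans gpos gle.
  have [a0|anz] := eqVneq a 0.
    case: D Dsupp Er feasD {optD optD' feasb gle feasDz optDz optDz'} => [|y D] _ Er feasD.
      by have := @margin_nil _ _ ip _ phi supp; rewrite Eg lte_fin Er => /(_ gpos).
    have := feasD y (or_introl erefl); rewrite a0 ip0l // mulr0; lra.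
  set n := hnorm ip a.
  have n0 : 0 < n by rewrite /n /hnorm sqrtr_gt0 ip_posdef.
  have hu : hnorm ip (n^-1 *: a) = 1.
    rewrite /hnorm ipZl // ipZr // -hnorm_sq // -/n mulrA -expr2 -exprMn.
    by rewrite mulVf ?gt_eqF // expr1n sqrtr1.
  have : ((n^-1)%:E <= margin ip phi (dset D))%E.
    apply: (@margin_lb _ _ _ _ _ _ _ _ hu) => y hy; rewrite lee_fin ipZl // mulrCA.
    by rewrite ler_pMr ?invr_gt0 //; apply: feasD.
  rewrite Er lee_fin invf_ple ?posrE // => hr.
  rewrite -hnorm_sq // -/n -exprVn.
  have : 0 < r^-1 by rewrite invr_gt0.
  rewrite !expr2; nra.
have Eb : ip b b = ip a a + 2 * c + d.
  by rewrite -ip_expand // addrC subrK.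
have Ed : ip (a - b) (a - b) = d.
  by rewrite /d -opprB ipNl // (ip_sym H (b - a)) ipNl // opprK.
rewrite /hnorm ler_sqrt /=; lra.
Qed.
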